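(* The class of minus-algebras with update is a finitely based variety (i.e. it is axiomatised by finitely many identities); hence so is the class of minus-semigroups with update.
   Context: A minus-algebra $(A,\circ,-)$ satisfies: $x\circ y=y-(y-x)$; $(A,\circ)$ is a right normal band (semigroup with $x\circ x=x$, $(x\circ y)\circ z=(y\circ x)\circ z$); there is an element $0$ with $x-x=0$ for all $x$; $x\circ0=0\circ x=0$; $(x-y)\circ x=x-y$; $(x-y)\circ y=0$; $(x-y)\circ z=(x\circ z)-y$; and the quasi-identity $s-x=t-x\ \&\ x\circ s=x\circ t\Rightarrow s=t$. A minus-algebra with update is a minus-algebra with a binary operation $\diamond$ satisfying $(x\diamond y)-x=x-(x\diamond y)=0$, $((x\diamond y)-y)\circ x=(x\diamond y)-y$ and $x\circ y=y\circ(x\diamond y)$. A minus-semigroup with update is a minus-algebra with update with an associative operation $\cdot$ (juxtaposition) satisfying $s(t-u)=st-su$. *)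

(* Defs.v *)
From Stdlib Require Import List.
Import ListNotations.

Inductive term (Op : Type) : Type :=
  | Var : nat -> term Op
  | App : Op -> term Op -> term Op -> term Op.
Arguments Var {Op} _.
Arguments App {Op} _ _ _.

Fixpoint eval {Op A : Type} (I : Op -> A -> A -> A) (v : nat -> A) (t : term Op) : A :=
  match t with
  | Var n => v n
  | App o t1 t2 => I o (eval I v t1) (eval I v t2)
  end.

Definition satisfies {Op A : Type} (I : Op -> A -> A -> A) (e : term Op * term Op) : Prop :=
  forall v : nat -> A, eval I v (fst e) = eval I v (snd e).

Definition finitely_based_variety (Op : Type)
  (K : forall A : Type, (Op -> A -> A -> A) -> Prop) : Prop :=
  exists E : list (term Op * term Op),
    forall (A : Type) (I : Op -> A -> A -> A), inhabited A ->
      (K A I <-> (forall e, In e E -> satisfies I e)).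

Section Defs.
Variable A : Type.

Definition minus_algebra_with_zero (circ minus : A -> A -> A) (z : A) : Prop :=
  (forall x y, circ x y = minus y (minus y x)) /\
  (forall x y w, circ (circ x y) w = circ x (circ y w)) /\
  (forall x, circ x x = x) /\
  (forall x y w, circ (circ x y) w = circ (circ y x) w) /\
  (forall x, minus x x = z) /\
  (forall x, circ x z = z /\ circ z x = z) /\
  (forall x y, circ (minus x y) x = minus x y) /\
  (forall x y, circ (minus x y) y = z) /\
  (forall x y w, circ (minus x y) w = minus (circ x w) y) /\
  (forall s t x, minus s x = minus t x -> circ x s = circ x t -> s = t).

Definition minus_algebra (circ minus : A -> A -> A) : Prop :=
  exists z, minus_algebra_with_zero circ minus z.

Definition minus_algebra_with_update (circ minus upd : A -> A -> A) : Prop :=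
  exists z, minus_algebra_with_zero circ minus z /\
    (forall x y, minus (upd x y) x = z /\ minus x (upd x y) = z) /\
    (forall x y, circ (minus (upd x y) y) x = minus (upd x y) y) /\
    (forall x y, circ x y = circ y (upd x y)).

Definition minus_semigroup_with_update (circ minus upd mul : A -> A -> A) : Prop :=
  minus_algebra_with_update circ minus upd /\
  (forall x y w, mul (mul x y) w = mul x (mul y w)) /\
  (forall s t u, mul s (minus t u) = minus (mul s t) (mul s u)).
End Defs.

Inductive opU : Type := UCirc | UMinus | UUpd.
Inductive opS : Type := SCirc | SMinus | SUpd | SMul.

Definition MAU_class : forall A : Type, (opU -> A -> A -> A) -> Prop :=
  fun A I => minus_algebra_with_update A (I UCirc) (I UMinus) (I UUpd).

Definition MSU_class : forall A : Type, (opS -> A -> A -> A) -> Prop :=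
  fun A I => minus_semigroup_with_update A (I SCirc) (I SMinus) (I SUpd) (I SMul).

(* Main.v *)
Require Import Defs.
From Stdlib Require Import List Lia.
Import ListNotations.
From Stdlib Require Import Setoid.
Section MA.
Variable A : Type.
Variables (c m u : A -> A -> A) (z : A).
Hypothesis h1 : forall x y, c x y = m y (m y x).
Hypothesis h2 : forall x y w, c (c x y) w = c x (c y w).
Hypothesis h3 : forall x, c x x = x.
Hypothesis h4 : forall x y w, c (c x y) w = c (c y x) w.
Hypothesis h5 : forall x, m x x = z.
Hypothesis h6 : forall x, c x z = z.
Hypothesis h6' : forall x, c z x = z.
Hypothesis h7 : forall x y, c (m x y) x = m x y.
Hypothesis h8 : forall x y, c (m x y) y = z.
Hypothesis h9 : forall x y w, c (m x y) w = m (c x w) y.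

Lemma sub0 y : m y z = y.
Proof. rewrite <- (h5 y), <- h1. apply h3. Qed.
Lemma zsub x : m z x = z.
Proof. rewrite <- (h7 z x). apply h6. Qed.
Lemma G a t : c a t = a -> m a t = z.
Proof.
  intro H. transitivity (c (m a t) a). symmetry; apply h7.
  transitivity (c (m a t) (c a t)). rewrite H; reflexivity.
  rewrite <- h2, h7. apply h8.
Qed.
Lemma L4a x y : m (m x y) x = z.
Proof. apply G, h7. Qed.
Lemma L4b x y : c x (m x y) = m x y.
Proof. rewrite h1, L4a, sub0. reflexivity. Qed.
Lemma L5 t a : m (c t a) t = z.
Proof. rewrite <- h9, h5, h6'. reflexivity. Qed.
Lemma L5' x t : m (c x t) t = z.
Proof. apply G. rewrite h2, h3. reflexivity. Qed.
Lemma L6a a t : m a t = z -> c t a = a.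
Proof. intro H. rewrite h1, H, sub0. reflexivity. Qed.
Lemma L6b a t : c t a = a -> m a t = z.
Proof. intro H. rewrite <- H. apply L5. Qed.
Lemma L7 a b s : c a s = a -> c b s = b -> c a b = c b a.
Proof.
  intros Ha Hb. transitivity (c (c a b) s). rewrite h2, Hb; reflexivity.
  rewrite h4, h2, Ha; reflexivity.
Qed.
Lemma N2 s t x : m (m s t) x = m (m s x) t.
Proof.
  transitivity (c (m s x) (m s t)). rewrite h9, L4b; reflexivity.
  transitivity (c (m s t) (m s x)). apply L7 with s; apply h7.
  rewrite h9, L4b; reflexivity.
Qed.
Lemma L9 a b : m (m a b) b = m a b.
Proof.
  transitivity (m (c a (m a b)) b). rewrite L4b; reflexivity.
  rewrite <- h9; apply h3.
Qed.
Lemma SAME p q w : c p w = p -> c q w = q -> m p q = z -> m q p = z -> p = q.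
Proof.
  intros Hp Hq H1 H2. apply L6a in H1. apply L6a in H2.
  transitivity (c q p). symmetry; exact H1.
  rewrite <- (L7 p q w Hp Hq). exact H2.
Qed.
Lemma L11 a b d : m a b = z -> m (m a d) (m b d) = z.
Proof.
  intro H. apply L6b. rewrite h9.
  rewrite (L6a (m a d) b). apply L9.
  rewrite N2, H. apply zsub.
Qed.
Lemma Trans a b d : m a b = z -> m b d = z -> m a d = z.
Proof.
  intros H H'. apply L6a in H. apply L6a in H'. apply L6b.
  rewrite <- H, <- h2, H'. reflexivity.
Qed.
Lemma N4 x s t : c x (m s t) = m (c x s) t.
Proof.
  assert (Hp : c (c x (m s t)) s = c x (m s t)) by (rewrite h2, h7; reflexivity).
  assert (Hq : c (m (c x s) t) s = m (c x s) t) by (rewrite h9, h2, h3; reflexivity).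
  apply SAME with s; try assumption.
  - apply L6b. rewrite h9.
    assert (E : c (c x s) (c x (m s t)) = c x (m s t)).
    { assert (E0 : c (c x s) x = c s x) by (rewrite h4, h2, h3; reflexivity).
      rewrite <- h2, E0, h2. apply L6a. apply G. exact Hp. }
    rewrite E. rewrite (h1 x (m s t)). rewrite N2, L9. reflexivity.
  - apply L6b. rewrite h2, h9.
    rewrite (L6a (m (c x s) t) s) by (apply G; exact Hq).
    rewrite L9. apply L6a. rewrite N2, L5, zsub. reflexivity.
Qed.

Section Upd.
Hypothesis h11 : forall x y, m (u x y) x = z.
Hypothesis h12 : forall x y, m x (u x y) = z.
Hypothesis h13 : forall x y, c (m (u x y) y) x = m (u x y) y.
Hypothesis h14 : forall x y, c x y = c y (u x y).

Lemma UPD1 x y : m (u x y) y = m x y.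
Proof.
  apply SAME with x. apply h13. apply h7.
  apply L11, h11. apply L11, h12.
Qed.
Lemma uu t : u t t = t.
Proof.
  transitivity (c t (u t t)). symmetry. apply L6a, h11.
  rewrite <- h14. apply h3.
Qed.

Section Q.
Hypothesis hq : forall s t x, m s x = m t x -> c x s = c x t -> s = t.

Lemma Uchar w x v : m w v = m x v -> c v w = c x v -> w = u x v.
Proof. intros H H'. apply hq with v. rewrite UPD1; exact H. rewrite <- h14; exact H'. Qed.
Lemma U4 p b : c p b = z -> u p b = p.
Proof.
  intro H. symmetry. apply Uchar. reflexivity. rewrite H.
  transitivity (c (c b p) p). rewrite h2, h3; reflexivity.
  rewrite h4, H. apply h6'.
Qed.
Lemma U1 x v w : m (u x v) w = u (m x w) v.
Proof.
  apply Uchar. rewrite N2, UPD1, N2. reflexivity.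
  rewrite N4, <- h14, h9. reflexivity.
Qed.
Lemma U2 w x v : c w (u x v) = u (c w x) v.
Proof.
  apply Uchar. rewrite <- N4, UPD1, N4. reflexivity.
  rewrite <- h2, h4, h2, <- h14, h2. reflexivity.
Qed.

Lemma N6 t s x : u (u t (m s x)) (c x s) = u t s.
Proof.
  apply hq with x.
  - rewrite !U1.
    rewrite (U4 (u (m t x) (m s x)) (c x s)).
    2:{ assert (Hp : c (m t x) (u (m t x) (m s x)) = u (m t x) (m s x)) by (apply L6a, h11).
        rewrite <- Hp at 1.
        rewrite (h4 (m t x)), (h2 (u (m t x) (m s x))), (h9 t x (c x s)).
        rewrite <- (h2 t x s), <- (h9 (c t x) x s), L5', h6', h6. reflexivity. }
    assert (K2 : c (m t x) (m s x) = c (m t x) s).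
    { rewrite N4, <- h9, L9. reflexivity. }
    assert (K : c (m s x) (c (m t x) s) = c (m t x) s).
    { rewrite <- (h2 (m s x) (m t x) s), (h4 (m s x) (m t x) s), (h2 (m t x) (m s x) s), h7.
      exact K2. }
    remember (m t x) as r eqn:Hr.
    apply Uchar.
    + rewrite U1, U4; [reflexivity|].
      rewrite h9. apply L6b.
      rewrite <- (h2 s r (m s x)), (h4 s r (m s x)), (h2 r s (m s x)), L4b. reflexivity.
    + rewrite U2. symmetry. apply Uchar.
      * transitivity z.
        -- apply L6b. exact K.
        -- symmetry. rewrite <- h9, <- h1.
           rewrite (h4 x s r), (h2 s x r), Hr, N4, L5, h6. reflexivity.
      * rewrite K. rewrite (h4 s r (m s x)), (h2 r s (m s x)), L4b. symmetry; exact K2.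
  - rewrite !U2.
    rewrite (U4 (c x t) (m s x)).
    2:{ rewrite (h4 x t), (h2 t x), N4, L5, h6. reflexivity. }
    assert (Ks : c s (c x s) = c x s).
    { rewrite <- (h2 s x s), (h4 s x s), (h2 x s s), h3. reflexivity. }
    assert (Kv : c (c x t) (c x s) = c (c x t) s).
    { rewrite <- (h2 (c x t) x s).
      assert (E : c (c x t) x = c t x) by (rewrite (h4 x t x), (h2 t x x), h3; reflexivity).
      rewrite E. apply h4. }
    assert (Kxv : c x (c x t) = c x t) by (rewrite <- (h2 x x t), h3; reflexivity).
    remember (c x t) as v eqn:Hv.
    assert (KA : c (c x s) (c v s) = c v s).
    { rewrite <- (h2 (c x s) v s), (h4 (c x s) v s), (h2 v (c x s) s).
      rewrite (h2 x s s), h3. exact Kv. }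
    apply Uchar.
    + rewrite U1, U4; [reflexivity|].
      rewrite h9. apply L6b.
      rewrite <- (h2 s v (c x s)), (h4 s v (c x s)), (h2 v s (c x s)), Ks. reflexivity.
    + rewrite U2. symmetry. apply Uchar.
      * transitivity z.
        -- apply L6b. exact KA.
        -- symmetry. apply L6b.
           rewrite (h2 x s (c s v)), <- (h2 s s v), h3, <- (h2 x s v), (h4 x s v), (h2 s x v), Kxv.
           reflexivity.
      * rewrite KA. rewrite (h4 s v (c x s)), (h2 v s (c x s)), Ks. symmetry; exact Kv.
Qed.
End Q.

Section Der.
Hypothesis h15 : forall t s x, u (u t (m s x)) (c x s) = u t s.
Lemma Dz s t x : m s x = m t x -> c x s = c x t -> m s t = z.
Proof.
  intros H H0.
  assert (Ha1 : m (m s t) x = z) by (rewrite N2, H; apply L4a).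
  assert (Hxa : c x (m s t) = m s t) by (apply L6a; exact Ha1).
  transitivity (c x (m s t)). symmetry; exact Hxa.
  rewrite <- (h7 s t) at 1.
  rewrite <- (h2 x (m s t) s), (h4 x (m s t) s), (h2 (m s t) x s), H0.
  rewrite <- (h2 (m s t) x t), (h4 (m s t) x t), Hxa. apply h8.
Qed.
Lemma Qder s t x : m s x = m t x -> c x s = c x t -> s = t.
Proof.
  intros H H0.
  assert (Dst := Dz s t x H H0).
  assert (Dts := Dz t s x (eq_sym H) (eq_sym H0)).
  assert (Hts : u t s = u t t) by (rewrite <- (h15 t s x), H, H0, h15; reflexivity).
  assert (Ust : u t s = s).
  { transitivity (c s (u t s)). symmetry. apply L6a. apply Trans with t. apply h11. exact Dts.
    rewrite <- h14. apply L6a. exact Dst. }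
  rewrite <- Ust, Hts. apply uu.
Qed.
End Der.
End Upd.
End MA.

Definition vx : term opU := Var 0.
Definition vy : term opU := Var 1.
Definition vw : term opU := Var 2.
Definition Cc (a b : term opU) := App UCirc a b.
Definition Mm (a b : term opU) := App UMinus a b.
Definition Uu (a b : term opU) := App UUpd a b.

Definition EU : list (term opU * term opU) := [
 (Cc vx vy, Mm vy (Mm vy vx));
 (Cc (Cc vx vy) vw, Cc vx (Cc vy vw));
 (Cc vx vx, vx);
 (Cc (Cc vx vy) vw, Cc (Cc vy vx) vw);
 (Mm vx vx, Mm vy vy);
 (Cc vx (Mm vy vy), Mm vy vy);
 (Cc (Mm vy vy) vx, Mm vy vy);
 (Cc (Mm vx vy) vx, Mm vx vy);
 (Cc (Mm vx vy) vy, Mm vx vx);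
 (Cc (Mm vx vy) vw, Mm (Cc vx vw) vy);
 (Mm (Uu vx vy) vx, Mm vx vx);
 (Mm vx (Uu vx vy), Mm vx vx);
 (Cc (Mm (Uu vx vy) vy) vx, Mm (Uu vx vy) vy);
 (Cc vx vy, Cc vy (Uu vx vy));
 (Uu (Uu vx (Mm vy vw)) (Cc vw vy), Uu vx vy) ].

Definition env {A : Type} (x y w : A) : nat -> A :=
  fun n => match n with 0 => x | 1 => y | _ => w end.

Lemma MAU_iff (A : Type) (I : opU -> A -> A -> A) : inhabited A ->
  (MAU_class A I <-> forall e, In e EU -> satisfies I e).
Proof.
  intros [a0]. split.
  - intros [z [[h1 [h2 [h3 [h4 [h5 [h6 [h7 [h8 [h9 hq]]]]]]]]] [h1112 [h13 h14]]]].
    assert (h6a : forall x, I UCirc x z = z) by (intro x; apply (h6 x)).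
    assert (h6b : forall x, I UCirc z x = z) by (intro x; apply (h6 x)).
    assert (h11 : forall x y, I UMinus (I UUpd x y) x = z) by (intros; apply h1112).
    assert (h12 : forall x y, I UMinus x (I UUpd x y) = z) by (intros; apply h1112).
    intros e He. simpl in He.
    repeat destruct He as [<- | He]; try destruct He; intro v; simpl.
    + apply h1.
    + apply h2.
    + apply h3.
    + apply h4.
    + rewrite !h5; reflexivity.
    + rewrite h5; apply h6a.
    + rewrite h5; apply h6b.
    + apply h7.
    + rewrite h5; apply h8.
    + apply h9.
    + rewrite h5; apply h11.
    + rewrite h5; apply h12.
    + apply h13.
    + apply h14.
    + exact (N6 A (I UCirc) (I UMinus) (I UUpd) z h1 h2 h3 h4 h5 h6a h6b h7 h8 h9 h11 h12 h13 h14 hq _ _ _).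
  - intro HE.
    assert (S : forall k, k < 15 -> forall x y w : A,
      eval I (env x y w) (fst (nth k EU (vx, vx))) = eval I (env x y w) (snd (nth k EU (vx, vx)))).
    { intros k Hk x y w. apply HE. apply nth_In. simpl. exact Hk. }
    set (c := I UCirc). set (m := I UMinus). set (u := I UUpd).
    set (z := m a0 a0).
    assert (g1 : forall x y, c x y = m y (m y x)) by (intros x y; exact (S 0 ltac:(lia) x y x)).
    assert (g2 : forall x y w, c (c x y) w = c x (c y w)) by (intros x y w; exact (S 1 ltac:(lia) x y w)).
    assert (g3 : forall x, c x x = x) by (intros x; exact (S 2 ltac:(lia) x x x)).
    assert (g4 : forall x y w, c (c x y) w = c (c y x) w) by (intros x y w; exact (S 3 ltac:(lia) x y w)).
    assert (g5 : forall x, m x x = z) by (intros x; exact (S 4 ltac:(lia) x a0 x)).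
    assert (g6 : forall x, c x z = z) by (intros x; exact (S 5 ltac:(lia) x a0 x)).
    assert (g6' : forall x, c z x = z) by (intros x; exact (S 6 ltac:(lia) x a0 x)).
    assert (g7 : forall x y, c (m x y) x = m x y) by (intros x y; exact (S 7 ltac:(lia) x y x)).
    assert (g8 : forall x y, c (m x y) y = z) by (intros x y; rewrite <- (g5 x); exact (S 8 ltac:(lia) x y x)).
    assert (g9 : forall x y w, c (m x y) w = m (c x w) y) by (intros x y w; exact (S 9 ltac:(lia) x y w)).
    assert (g11 : forall x y, m (u x y) x = z) by (intros x y; rewrite <- (g5 x); exact (S 10 ltac:(lia) x y x)).
    assert (g12 : forall x y, m x (u x y) = z) by (intros x y; rewrite <- (g5 x); exact (S 11 ltac:(lia) x y x)).
    assert (g13 : forall x y, c (m (u x y) y) x = m (u x y) y) by (intros x y; exact (S 12 ltac:(lia) x y x)).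
    assert (g14 : forall x y, c x y = c y (u x y)) by (intros x y; exact (S 13 ltac:(lia) x y x)).
    assert (g15 : forall t s x, u (u t (m s x)) (c x s) = u t s) by (intros t s x; exact (S 14 ltac:(lia) t s x)).
    exists z. split.
    + refine (conj g1 (conj g2 (conj g3 (conj g4 (conj g5 (conj (fun x => conj (g6 x) (g6' x)) (conj g7 (conj g8 (conj g9 _))))))))).
      exact (Qder A c m u z g1 g2 g3 g4 g5 g6' g7 g8 g9 g11 g14 g15).
    + exact (conj (fun x y => conj (g11 x y) (g12 x y)) (conj g13 g14)).
Qed.

Definition fUS (o : opU) : opS :=
  match o with UCirc => SCirc | UMinus => SMinus | UUpd => SUpd end.

Fixpoint mapT (t : term opU) : term opS :=
  match t with
  | Var n => Var n
  | App o a b => App (fUS o) (mapT a) (mapT b)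
  end.

Lemma eval_map {A : Type} (I : opS -> A -> A -> A) v t :
  eval I v (mapT t) = eval (fun o => I (fUS o)) v t.
Proof. induction t; simpl; congruence. Qed.

Definition ES : list (term opS * term opS) :=
  map (fun e => (mapT (fst e), mapT (snd e))) EU ++
  [ (App SMul (App SMul (Var 0) (Var 1)) (Var 2), App SMul (Var 0) (App SMul (Var 1) (Var 2)));
    (App SMul (Var 0) (App SMinus (Var 1) (Var 2)),
     App SMinus (App SMul (Var 0) (Var 1)) (App SMul (Var 0) (Var 2))) ].

Theorem proposition5p7 :
  finitely_based_variety opU MAU_class /\ finitely_based_variety opS MSU_class.
Proof.
  split.
  - exists EU. exact MAU_iff.
  - exists ES. intros A I Hinh. split.
    + intros [HU [Ha Hd]] e He. apply in_app_iff in He. destruct He as [He|He].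
      * apply in_map_iff in He. destruct He as [e0 [<- He0]].
        intro v. simpl. rewrite !eval_map.
        exact (proj1 (MAU_iff A (fun o => I (fUS o)) Hinh) HU e0 He0 v).
      * simpl in He. destruct He as [<- | [<- | []]]; intro v; simpl.
        -- apply Ha.
        -- apply Hd.
    + intro HE. split.
      * apply (proj2 (MAU_iff A (fun o => I (fUS o)) Hinh)).
        intros e0 He0 v.
        assert (H := HE (mapT (fst e0), mapT (snd e0))
                  (proj2 (in_app_iff _ _ _) (or_introl (in_map (fun e => (mapT (fst e), mapT (snd e))) _ _ He0))) v).
        simpl in H. rewrite !eval_map in H. exact H.
      * split.
        -- intros x y w.
           refine (HE (App SMul (App SMul (Var 0) (Var 1)) (Var 2), App SMul (Var 0) (App SMul (Var 1) (Var 2))) _ (env x y w)).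
           apply in_app_iff; right; simpl; auto.
        -- intros x y w.
           refine (HE (App SMul (Var 0) (App SMinus (Var 1) (Var 2)),
             App SMinus (App SMul (Var 0) (Var 1)) (App SMul (Var 0) (Var 2))) _ (env x y w)).
           apply in_app_iff; right; simpl; auto.
Qed.
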